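(* Let $a>0$, $b>0$ and $f(x)=a^2\left(\frac{1+b^2x}{b^2+x}\right)^2$ on $(0,\infty)$. 1) If $b>1$, then for every $x_0>0$ the sequence $x_n=f(x_{n-1})$, $n\ge1$, converges (to a fixed point of $f$). 2) If $b<1$, then for every $y_0>0$ the sequence $y_n=g(y_{n-1})$, $n\ge1$, converges, where $g=f\circ f$. *)

(* Defs.v *)
From Stdlib Require Import Reals.
Open Scope R_scope.

Definition fab (a b : R) (x : R) : R :=
  a ^ 2 * ((1 + b ^ 2 * x) / (b ^ 2 + x)) ^ 2.

Fixpoint orbit (h : R -> R) (x0 : R) (n : nat) : R :=
  match n with
  | O => x0
  | S n => h (orbit h x0 n)
  end.

(* Main.v *)
Require Import Defs.
From Stdlib Require Import Reals Lra Lia.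
Open Scope R_scope.

Lemma lim_ge (u : nat -> R) l c : (forall n, c <= u n) -> Un_cv u l -> c <= l.
Proof.
  intros H Hc. destruct (Rle_or_lt c l) as [h|h]; auto. exfalso.
  destruct (Hc (c - l)) as [N HN]; [lra|].
  specialize (HN N (le_n N)). unfold R_dist in HN.
  pose proof (Rle_abs (u N - l)). specialize (H N). lra.
Qed.

Lemma mono_conv (F : R -> R) m M (hm : 0 < m)
  (hb : forall x, 0 < x -> m <= F x <= M)
  (hmono : forall x y, 0 < x -> x <= y -> F x <= F y) x0 (h0 : 0 < x0) :
  exists l, 0 < l /\ Un_cv (orbit F x0) l.
Proof.
  set (c := Rmin x0 m). set (C := Rmax x0 M).
  assert (hc : 0 < c) by (unfold c; apply Rmin_glb_lt; lra).
  assert (Hb : forall n, c <= orbit F x0 n <= C).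
  { induction n as [|n IH]; simpl.
    - split; [apply Rmin_l | apply Rmax_l].
    - assert (0 < orbit F x0 n) by lra. specialize (hb _ H).
      split; [apply Rle_trans with m; [apply Rmin_r|lra]
             | apply Rle_trans with M; [lra|apply Rmax_r]]. }
  assert (Hpos : forall n, 0 < orbit F x0 n) by (intro n; specialize (Hb n); lra).
  assert (Hlim : exists l, Un_cv (orbit F x0) l).
  { destruct (Rle_dec x0 (F x0)) as [h|h].
    - assert (G : Un_growing (orbit F x0)).
      { intro n; induction n as [|n IH]; simpl; [exact h|].
        apply hmono; [apply (Hpos n)|exact IH]. }
      destruct (growing_cv _ G) as [l Hl].
      + exists C. intros x [i ->]. apply Hb.
      + exists l; exact Hl.
    - assert (G : Un_decreasing (orbit F x0)).
      { intro n; induction n as [|n IH]; simpl.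
        - lra.
        - apply hmono; [apply (Hpos (S n))|exact IH]. }
      destruct (decreasing_cv _ G) as [l Hl].
      + exists (- c). intros x [i ->]. unfold opp_seq. specialize (Hb i). lra.
      + exists l; exact Hl. }
  destruct Hlim as [l Hl]. exists l; split; auto.
  apply Rlt_le_trans with c; auto. apply (lim_ge _ _ _ (fun n => proj1 (Hb n)) Hl).
Qed.

Definition hh (b x : R) := (1 + b ^ 2 * x) / (b ^ 2 + x).

Lemma fab_hh a b x : fab a b x = a ^ 2 * (hh b x) ^ 2.
Proof. reflexivity. Qed.

Lemma hh_diff b x y : 0 < b -> 0 < x -> 0 < y ->
  hh b y - hh b x = (b^2*b^2 - 1) * (y - x) * / ((b^2 + x) * (b^2 + y)).
Proof.
  intros hb hx hy. unfold hh.
  assert (0 < b^2) by (apply pow_lt; lra).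
  field. split; lra.
Qed.

Lemma hh_bounds b x : 0 < b -> 0 < x ->
  / (/ b^2 + b^2) <= hh b x <= / b^2 + b^2.
Proof.
  intros hb hx. assert (hB : 0 < b^2) by (apply pow_lt; lra).
  set (K := / b^2 + b^2).
  assert (hK : 0 < K) by (unfold K; pose proof (Rinv_0_lt_compat _ hB); lra).
  split.
  - assert (E : hh b x - / K = (1 + b^2*b^2*b^2*x) * / (b^2 * K * (b^2 + x))).
    { unfold hh, K. field. pose proof (pow2_ge_0 (b*b)). repeat split; lra. }
    assert (0 <= (1 + b^2*b^2*b^2*x) * / (b^2 * K * (b^2 + x))).
    { apply Rmult_le_pos. 
      - assert (0 <= b^2*b^2*b^2*x) by (repeat apply Rmult_le_pos; lra). lra.
      - apply Rlt_le, Rinv_0_lt_compat. repeat apply Rmult_lt_0_compat; lra. }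
    lra.
  - assert (E : K - hh b x = (x * / b^2 + b^2 * b^2) * / (b^2 + x)).
    { unfold hh, K. field. split; lra. }
    assert (0 <= (x * / b^2 + b^2 * b^2) * / (b^2 + x)).
    { apply Rmult_le_pos.
      - assert (0 <= x * / b^2) by (apply Rmult_le_pos; [lra| apply Rlt_le, Rinv_0_lt_compat; lra]).
        assert (0 <= b^2*b^2) by (apply Rmult_le_pos; lra). lra.
      - apply Rlt_le, Rinv_0_lt_compat. lra. }
    lra.
Qed.

Lemma hh_pos b x : 0 < b -> 0 < x -> 0 < hh b x.
Proof.
  intros hb hx. destruct (hh_bounds b x hb hx) as [h _].
  assert (0 < b^2) by (apply pow_lt; lra).
  assert (0 < / b^2) by (apply Rinv_0_lt_compat; lra).
  assert (0 < / (/ b^2 + b^2)) by (apply Rinv_0_lt_compat; lra). lra.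
Qed.

Lemma fab_bounds a b x : 0 < a -> 0 < b -> 0 < x ->
  a^2 * (/ (/ b^2 + b^2))^2 <= fab a b x <= a^2 * (/ b^2 + b^2)^2.
Proof.
  intros ha hb hx. rewrite fab_hh.
  destruct (hh_bounds b x hb hx) as [h1 h2].
  assert (0 < b^2) by (apply pow_lt; lra).
  assert (0 < / b^2) by (apply Rinv_0_lt_compat; lra).
  assert (0 < / (/ b^2 + b^2)) by (apply Rinv_0_lt_compat; lra).
  assert (0 < a^2) by (apply pow_lt; lra).
  split; apply Rmult_le_compat_l; try lra; apply pow_incr; lra.
Qed.

Lemma fab_pos a b x : 0 < a -> 0 < b -> 0 < x -> 0 < fab a b x.
Proof.
  intros ha hb hx. rewrite fab_hh. apply Rmult_lt_0_compat; apply pow_lt; auto.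
  apply hh_pos; auto.
Qed.

Lemma lowpos a b : 0 < a -> 0 < b -> 0 < a^2 * (/ (/ b^2 + b^2))^2.
Proof.
  intros ha hb.
  assert (0 < b^2) by (apply pow_lt; lra).
  assert (0 < / b^2) by (apply Rinv_0_lt_compat; lra).
  assert (0 < / (/ b^2 + b^2)) by (apply Rinv_0_lt_compat; lra).
  apply Rmult_lt_0_compat; apply pow_lt; auto.
Qed.

Lemma fab_incr a b x y : 0 < a -> 1 < b -> 0 < x -> x <= y -> fab a b x <= fab a b y.
Proof.
  intros ha hb hx hxy. rewrite !fab_hh.
  assert (0 < b^2) by (apply pow_lt; lra).
  assert (1 < b^2) by (simpl; nra).
  assert (0 <= hh b y - hh b x).
  { rewrite hh_diff by lra. apply Rmult_le_pos.
    - apply Rmult_le_pos; nra.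
    - apply Rlt_le, Rinv_0_lt_compat. apply Rmult_lt_0_compat; lra. }
  pose proof (hh_pos b x ltac:(lra) hx).
  apply Rmult_le_compat_l; [apply pow_le; lra|]. apply pow_incr; lra.
Qed.

Lemma fab_decr a b x y : 0 < a -> 0 < b -> b < 1 -> 0 < x -> x <= y -> fab a b y <= fab a b x.
Proof.
  intros ha hb hb1 hx hxy. rewrite !fab_hh.
  assert (0 < b^2) by (apply pow_lt; lra).
  assert (b^2 < 1) by (simpl; nra).
  assert (0 <= hh b x - hh b y).
  { replace (hh b x - hh b y) with (- (hh b y - hh b x)) by ring.
    rewrite hh_diff by lra.
    assert (0 <= (1 - b^2*b^2) * (y - x) * / ((b ^ 2 + x) * (b ^ 2 + y))).
    { apply Rmult_le_pos.
      - apply Rmult_le_pos; nra.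
      - apply Rlt_le, Rinv_0_lt_compat. apply Rmult_lt_0_compat; lra. }
    lra. }
  pose proof (hh_pos b y ltac:(lra) ltac:(lra)).
  apply Rmult_le_compat_l; [apply pow_le; lra|]. apply pow_incr; lra.
Qed.

Lemma fab_cont a b l : 0 < b -> 0 < l -> continuity_pt (fab a b) l.
Proof.
  intros hb hl. unfold fab.
  assert (0 < b^2) by (apply pow_lt; lra).
  reg. lra.
Qed.

Theorem lemma4 (a b : R) (ha : 0 < a) (hb : 0 < b) :
  (1 < b ->
     forall x0 : R, 0 < x0 ->
       exists l : R, 0 < l /\ fab a b l = l /\ Un_cv (orbit (fab a b) x0) l) /\
  (b < 1 ->
     forall y0 : R, 0 < y0 ->
       exists l : R, Un_cv (orbit (fun x => fab a b (fab a b x)) y0) l).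
Proof.
  split.
  - intros hb1 x0 hx0.
    destruct (mono_conv (fab a b) _ _ (lowpos a b ha hb)
      (fun x hx => fab_bounds a b x ha hb hx)
      (fun x y hx hxy => fab_incr a b x y ha hb1 hx hxy) x0 hx0) as [l [hl Hl]].
    exists l. split; auto. split; auto.
    assert (H1 : Un_cv (fun n => fab a b (orbit (fab a b) x0 n)) (fab a b l))
      by (apply continuity_seq; auto; apply fab_cont; auto).
    assert (H2 : Un_cv (fun n => fab a b (orbit (fab a b) x0 n)) l).
    { intros eps he. destruct (Hl eps he) as [N HN]. exists N.
      intros n hn. apply (HN (S n)). lia. }
    eapply UL_sequence; eauto.
  - intros hb1 y0 hy0.
    destruct (mono_conv (fun x => fab a b (fab a b x)) _ _ (lowpos a b ha hb)
      (fun x hx => fab_bounds a b _ ha hb (fab_pos a b x ha hb hx))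
      (fun x y hx hxy => fab_decr a b _ _ ha hb hb1 (fab_pos a b y ha hb ltac:(lra))
                           (fab_decr a b x y ha hb hb1 hx hxy)) y0 hy0) as [l [_ Hl]].
    exists l; exact Hl.
Qed.
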